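(* Fix a round $t$. Let $x_{ti} \in \mathbb{R}^d$ and revenues $r_{ti}$ with $|r_{ti}| \le 1$. Let $\theta^* \in \mathbb{R}^d$, $\alpha_t > 0$, and let $V_t$ be positive definite. Let $z_{ti}$ be real numbers, and let $S_t$ be the chosen assortment. Suppose that for all $i \in S_t$, $$0 \le z_{ti} - x_{ti}^\top\theta^* \le 2\alpha_t\|x_{ti}\|_{V_t^{-1}}.$$ Then $$\tilde R_t(S_t) - R_t(S_t,\theta^* ) \le 2\alpha_t\max_{i\in S_t}\|x_{ti}\|_{V_t^{-1}}.$$
   Context: For an assortment $S$, the MNL expected revenue is $$R_t(S,\theta) = \frac{\sum_{i\in S}r_{ti}\exp(x_{ti}^\top\theta)}{1+\sum_{j\in S}\exp(x_{tj}^\top\theta)},$$ and the optimistic revenue is $$\tilde R_t(S) = \frac{\sum_{i\in S}r_{ti}\exp(z_{ti})}{1+\sum_{j\in S}\exp(z_{tj})}.$$ Also $\|x\|_{V^{-1}} = \sqrt{x^\top V^{-1}x}$. *)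

(* Defs.v *)
From HB Require Import structures.
From mathcomp Require Import all_boot all_order all_algebra.
From mathcomp Require Import all_classical all_reals all_analysis.
Set Implicit Arguments. Unset Strict Implicit. Unset Printing Implicit Defensive.
Import Order.TTheory GRing.Theory Num.Theory.
Local Open Scope ring_scope.

Definition dotv (R : realType) (d : nat) (x y : 'cV[R]_d) : R := (x^T *m y) 0 0.

Definition posdef (R : realType) (d : nat) (V : 'M[R]_d) : Prop :=
  V^T = V /\ forall u : 'cV[R]_d, u != 0 -> 0 < (u^T *m V *m u) 0 0.

Definition wnorm (R : realType) (d : nat) (V : 'M[R]_d) (x : 'cV[R]_d) : R :=
  Num.sqrt ((x^T *m invmx V *m x) 0 0).

Definition mnl_rev (R : realType) (n d : nat) (r : 'I_n -> R)
  (x : 'I_n -> 'cV[R]_d) (S : {set 'I_n}) (theta : 'cV[R]_d) : R :=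
  (\sum_(i in S) r i * expR (dotv (x i) theta)) /
  (1 + \sum_(j in S) expR (dotv (x j) theta)).

Definition opt_rev (R : realType) (n : nat) (r : 'I_n -> R) (z : 'I_n -> R)
  (S : {set 'I_n}) : R :=
  (\sum_(i in S) r i * expR (z i)) / (1 + \sum_(j in S) expR (z j)).

(* Main.v *)
Require Import Defs.
From HB Require Import structures.
From mathcomp Require Import all_boot all_order all_algebra.
From mathcomp Require Import all_classical all_reals all_analysis.
From mathcomp Require Import ring lra.
Import Order.TTheory GRing.Theory Num.Theory.
Import numFieldNormedType.Exports.
Local Open Scope ring_scope.

Module Helpers.
Lemma alg (R : realType) (n : nat) (S : {set 'I_n}) (r e dl : 'I_n -> R) (M : R) : 0 <= M ->
  (forall i, `|r i| <= 1) -> (forall i, 0 < e i) ->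
  (forall i, i \in S -> 0 <= dl i <= M) ->
  \sum_(i in S) dl i * e i * (r i - (\sum_(j in S) r j * e j) / (1 + \sum_(j in S) e j))
   <= M * (1 + \sum_(j in S) e j).
Proof.
move=> M0 hr he hd.
set B := 1 + _; set f := _ / B.
have B0 : 0 < B by rewrite /B ltr_pwDl // sumr_ge0 // => i _; exact: ltW.
have sumid : \sum_(i in S) e i * (r i - f) = f.
  under eq_bigr do rewrite mulrBr.
  rewrite sumrB.
  have -> : \sum_(i in S) e i * f = f * \sum_(i in S) e i by rewrite mulr_sumr; apply: eq_bigr => i _; rewrite mulrC.
  have -> : \sum_(i in S) e i * r i = f * B by rewrite /f divfK ?gt_eqF // ; apply: eq_bigr => i _; rewrite mulrC.
  rewrite /B mulrDr mulr1; lra.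
apply: (@le_trans _ _ (M * \sum_(i in S) e i * Num.max (r i - f) 0)).
  rewrite mulr_sumr; apply: ler_sum => i iS.
  have /andP[d0 dM] := hd i iS; have e0 := he i.
  case: (lerP 0 (r i - f)) => h.
    have ew : 0 <= e i * (r i - f) by apply: mulr_ge0 => //; exact: ltW.
    rewrite -mulrA; apply: ler_wpM2r => //.
  rewrite !mulr0 -mulrA; apply: mulr_ge0_le0 => //.
  by apply: mulr_ge0_le0; [exact: ltW | exact: ltW].
apply: ler_wpM2l => //.
have hrr i : -1 <= r i <= 1 by rewrite -ler_norml.
case: (lerP 0 f) => hf.
  rewrite /B; apply: (@le_trans _ _ (\sum_(i in S) e i)); last lra.
  apply: ler_sum => i _; rewrite -[X in _ <= X]mulr1; apply: ler_wpM2l; first exact: ltW.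
  have := hrr i; rewrite ge_max; case/andP => _ h1; apply/andP; split; lra.
have -> : \sum_(i in S) e i * Num.max (r i - f) 0 =
   \sum_(i in S) e i * (r i - f) + \sum_(i in S) e i * Num.max (f - r i) 0.
  rewrite -big_split /=; apply: eq_bigr => i _; rewrite -mulrDr; congr (_ * _).
  by case: (lerP 0 (r i - f)) => h; case: (lerP 0 (f - r i)) => h2; lra.
rewrite sumid /B.
have : \sum_(i in S) e i * Num.max (f - r i) 0 <= \sum_(i in S) e i.
  apply: ler_sum => i _; rewrite -[X in _ <= X]mulr1; apply: ler_wpM2l; first exact: ltW.
  have := hrr i; rewrite ge_max => h; apply/andP; split; lra.
lra.
Qed.
Lemma is_derive_lin (R : realType) (a b s : R) : is_derive s 1 (fun t => a + b * t) b.
Proof.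
have H := is_deriveD (is_derive_cst a s 1) (is_deriveZ b (is_derive_id s (1:R))).
rewrite add0r /= in H.
apply: is_derive_eq; exact: mulr1.
Qed.

Lemma is_derive_expl (R : realType) (a b s : R) :
  is_derive s 1 (fun t => expR (a + b * t)) (expR (a + b * s) * b).
Proof.
have H := is_derive1_comp (f := expR) (g := fun t => a + b * t) (x := s) (is_derive_expR (a + b * s)) (@is_derive_lin R a b s).
exact: H.
Qed.

Local Open Scope classical_set_scope.
Lemma key (R : realType) (n : nat) (S : {set 'I_n}) (r u dl : 'I_n -> R) (M : R) :
  0 <= M -> (forall i, `|r i| <= 1) -> (forall i, i \in S -> 0 <= dl i <= M) ->
  (\sum_(i in S) r i * expR (u i + dl i)) / (1 + \sum_(j in S) expR (u j + dl j)) -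
  (\sum_(i in S) r i * expR (u i)) / (1 + \sum_(j in S) expR (u j)) <= M.
Proof.
move=> M0 hr hd.
pose E := fun i (s : R) => expR (u i + dl i * s).
pose N := fun s => \sum_(i in S) r i * E i s.
pose D := fun s => 1 + \sum_(i in S) E i s.
pose Di := fun s => (D s)^-1.
pose dN := fun s => \sum_(i in S) r i * (E i s * dl i).
pose dD := fun s => \sum_(i in S) E i s * dl i.
have Dpos s : 0 < D s.
  by rewrite /D ltr_pwDl // sumr_ge0 // => i _; exact: ltW (expR_gt0 _).
have dNd (s : R) : is_derive s (1:R) N (dN s).
  have H := @is_derive_sum _ _ _ n (fun i (s : R) => if i \in S then r i * E i s else 0) s (1 : R)
    (fun i => if i \in S then r i * (E i s * dl i) else 0).
  rewrite fct_sumE in H.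
  have -> : N = fun s => \sum_(i < n) (if i \in S then r i * E i s else 0).
    by apply/funext => t; rewrite /N big_mkcond.
  rewrite /dN big_mkcond; apply: H => i.
  case: (i \in S) => /=.
    exact: (is_deriveZ (r i) (@is_derive_expl R (u i) (dl i) s)).
  exact: is_derive_cst.
have dDd (s : R) : is_derive s (1:R) D (dD s).
  have H := @is_derive_sum _ _ _ n (fun i (s : R) => if i \in S then E i s else 0) s (1 : R)
    (fun i => if i \in S then E i s * dl i else 0).
  rewrite fct_sumE in H.
  have -> : D = cst 1 + fun s => \sum_(i < n) (if i \in S then E i s else 0).
    by apply/funext => t; rewrite /D big_mkcond.
  rewrite /dD big_mkcond; rewrite -[X in is_derive _ _ _ X]add0r; apply: is_deriveD.
  apply: H => i.
  case: (i \in S) => /=.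
    exact: (@is_derive_expl R (u i) (dl i) s).
  exact: is_derive_cst.
have dDi (s : R) : is_derive s (1:R) Di (- (D s) ^- 2 *: dD s).
  have Dn0 := lt0r_neq0 (Dpos s); by apply: is_deriveV.
pose df := fun s => N s *: (- (D s) ^- 2 *: dD s) + Di s *: dN s.
pose g : R -> R := fun s => N s * Di s.
have dg (s : R) : is_derive s (1:R) g (df s) by exact: (is_deriveM (dNd s) (dDi s)).
have [c _ hc] : exists2 c, c \in `[(0:R), 1]%R & g 1 - g 0 = df c * (1 - 0).
  have H01 : (0:R) <= 1 by exact: ler01.
  have hd' : forall x, x \in `](0:R), 1[%R -> is_derive x 1 g (df x) by move=> x _; exact: (dg x).
  apply: (MVT_segment H01 hd').
  have gc : continuous g.
    move=> x; have : derivable g x 1 by case: (dg x).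
    move/derivable1_diffP; exact: differentiable_continuous.
  exact: continuous_subspaceT gc.
move: hc; rewrite subr0 mulr1 /= => hc.
have h1 : \sum_(i in S) r i * E i 1 = \sum_(i in S) r i * expR (u i + dl i)
  by apply: eq_bigr => i _; rewrite /E mulr1.
have h2 : \sum_(i in S) E i 1 = \sum_(i in S) expR (u i + dl i)
  by apply: eq_bigr => i _; rewrite /E mulr1.
have h3 : \sum_(i in S) r i * E i 0 = \sum_(i in S) r i * expR (u i)
  by apply: eq_bigr => i _; rewrite /E mulr0 addr0.
have h4 : \sum_(i in S) E i 0 = \sum_(i in S) expR (u i)
  by apply: eq_bigr => i _; rewrite /E mulr0 addr0.
move: hc; rewrite /g /N /Di /D /= h1 h2 h3 h4 => ->.
have K := @alg R n S r (fun i => E i c) dl M M0 hr (fun i => expR_gt0 _) hd.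
rewrite /= -/(D c) -/(N c) in K.
have eq : \sum_(i in S) dl i * E i c * (r i - N c / D c) = dN c - N c / D c * dD c.
  rewrite /dN /dD mulr_sumr -sumrB; apply: eq_bigr => i _; ring.
rewrite eq in K.
have Dn0 := lt0r_neq0 (Dpos c).
have -> : df c = (dN c - N c / D c * dD c) / D c.
  rewrite /df /Di /GRing.scale /=. field; exact: Dn0.
by rewrite ler_pdivrMr.
Qed.
End Helpers.

Theorem lemma5 (R : realType) (n d : nat) (x : 'I_n -> 'cV[R]_d) (r : 'I_n -> R)
  (theta : 'cV[R]_d) (alpha : R) (V : 'M[R]_d) (z : 'I_n -> R) (S : {set 'I_n}) :
  (forall i, `|r i| <= 1) ->
  0 < alpha ->
  posdef V ->
  (forall i, i \in S ->
     0 <= z i - dotv (x i) theta /\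
     z i - dotv (x i) theta <= 2 * alpha * wnorm V (x i)) ->
  opt_rev r z S - mnl_rev r x S theta <=
    2 * alpha * \big[Num.max/0]_(i in S) wnorm V (x i).
Proof.
move=> hr ha _ hz.
set mx := \big[Num.max/0]_(i in S) wnorm V (x i).
have mx0 : 0 <= mx.
  rewrite /mx; apply: (big_ind (fun y => 0 <= y)) => //.
    by move=> a b a0 b0; rewrite le_max a0.
  by move=> i _; exact: sqrtr_ge0.
have M0 : 0 <= 2 * alpha * mx by rewrite mulr_ge0 // mulr_ge0 // ltW.
have hd : forall i, i \in S -> 0 <= z i - dotv (x i) theta <= 2 * alpha * mx.
  move=> i iS; have [h1 h2] := hz i iS; rewrite h1 /=.
  apply: (le_trans h2); apply: ler_wpM2l; first by rewrite mulr_ge0 // ltW.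
  by rewrite /mx (bigD1 i) //= le_max lexx.
have := @Helpers.key R n S r (fun i => dotv (x i) theta) (fun i => z i - dotv (x i) theta) _ M0 hr hd.
have e i : dotv (x i) theta + (z i - dotv (x i) theta) = z i by rewrite addrC subrK.
rewrite /opt_rev /mnl_rev.
have -> : \sum_(i in S) r i * expR (dotv (x i) theta + (z i - dotv (x i) theta)) = \sum_(i in S) r i * expR (z i)
  by apply: eq_bigr => i _; rewrite e.
have -> : \sum_(i in S) expR (dotv (x i) theta + (z i - dotv (x i) theta)) = \sum_(i in S) expR (z i)
  by apply: eq_bigr => i _; rewrite e.
by [].
Qed.
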